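(* Let $\alpha$ be irrational, $K\ge 2$, and let $0\le N<q_K$ have Ostrowski expansion $N=\sum_{\ell=0}^{K-1}b_\ell q_\ell$ (with $b_\ell:=0$ for $\ell\ge K$). Let $1\le \ell\le K-1$ with $b_\ell\ge1$, and let $\varepsilon_\ell(N):=q_\ell\sum_{k=\ell+1}^{K-1}(-1)^{k+\ell}b_k\delta_k$. Then: (i) $-\frac{1}{a_{\ell+1}}\le -q_\ell\delta_\ell\le \varepsilon_\ell(N)\le \frac{1}{a_{\ell+1}}$; (ii) $1-\lvert\varepsilon_\ell(N)\rvert\gg \frac{1}{a_{\ell+2}}$, and if moreover $b_{\ell+1}\le \frac{a_{\ell+2}}{2}$, then $1-\lvert \varepsilon_\ell(N)\rvert\gg 1$, with absolute implied constants.
   Context: For irrational $\alpha=[a_0;a_1,a_2,\dots]$, $p_k/q_k=[a_0;a_1,\dots,a_k]$ denote the convergents, with $q_{k+1}=a_{k+1}q_k+q_{k-1}$, and $\delta_k:=\lVert q_k\alpha\rVert=\lvert q_k\alpha-p_k\rvert$, where $\lVert x\rVert$ is the distance from $x$ to the nearest integer. The Ostrowski expansion of an integer $0\le N<q_K$ is the unique representation $N=\sum_{\ell=0}^{K-1}b_\ell q_\ell$ with integers $0\le b_\ell\le a_{\ell+1}$, $b_0<a_1$, and $b_{\ell-1}=0$ whenever $b_\ell=a_{\ell+1}$. $f\gg g$ means $f\ge c\,g$ for a positive absolute constant $c$. *)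

(* Defs.v *)
From Stdlib Require Import Reals ZArith Lra Lia.
Open Scope R_scope.

(* floor of a real number: Int_part r = up r - 1 is the floor of r *)
Definition floorZ (x : R) : Z := Int_part x.

Fixpoint cf_x (alpha : R) (k : nat) : R :=
  match k with
  | O => alpha
  | S k' => / (cf_x alpha k' - IZR (floorZ (cf_x alpha k')))
  end.

Definition cf_a (alpha : R) (k : nat) : Z := floorZ (cf_x alpha k).

(* denominators of convergents: q_{-1} = 0, q_0 = 1, q_{k+1} = a_{k+1} q_k + q_{k-1} *)
Fixpoint cf_q (alpha : R) (k : nat) : Z :=
  match k with
  | O => 1%Z
  | S O => cf_a alpha 1
  | S ((S k'') as k') => (cf_a alpha k * cf_q alpha k' + cf_q alpha k'')%Z
  end.

(* numerators of convergents: p_{-1} = 1, p_0 = a_0, p_{k+1} = a_{k+1} p_k + p_{k-1} *)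
Fixpoint cf_p (alpha : R) (k : nat) : Z :=
  match k with
  | O => cf_a alpha 0
  | S O => (cf_a alpha 1 * cf_a alpha 0 + 1)%Z
  | S ((S k'') as k') => (cf_a alpha k * cf_p alpha k' + cf_p alpha k'')%Z
  end.

(* delta_k = || q_k alpha || = | q_k alpha - p_k | *)
Definition cf_delta (alpha : R) (k : nat) : R :=
  Rabs (IZR (cf_q alpha k) * alpha - IZR (cf_p alpha k)).

Definition irrational (alpha : R) : Prop :=
  forall (m n : Z), n <> 0%Z -> alpha <> IZR m / IZR n.

(* finite sum  sum_{i = m}^{n-1} f i  (empty if n <= m) *)
Fixpoint sumR_range (m : nat) (len : nat) (f : nat -> R) : R :=
  match len with
  | O => 0
  | S l => f m + sumR_range (S m) l f
  end.
Definition sumR (m n : nat) (f : nat -> R) : R := sumR_range m (n - m) f.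

Definition ostrowski (alpha : R) (K : nat) (N : Z) (b : nat -> Z) : Prop :=
  (0 <= N < cf_q alpha K)%Z /\
  IZR N = sumR 0 K (fun l => IZR (b l) * IZR (cf_q alpha l)) /\
  (forall l, (l < K)%nat -> (0 <= b l <= cf_a alpha (S l))%Z) /\
  (b 0%nat < cf_a alpha 1)%Z /\
  (forall l, (1 <= l < K)%nat -> b l = cf_a alpha (S l) -> b (l - 1)%nat = 0%Z) /\
  (forall l, (K <= l)%nat -> b l = 0%Z).

Definition ostr_eps (alpha : R) (K : nat) (b : nat -> Z) (l : nat) : R :=
  IZR (cf_q alpha l) *
  sumR (S l) K (fun k => (-1) ^ (k + l) * IZR (b k) * cf_delta alpha k).

(* Main.v *)
Require Import Defs.
From Stdlib Require Import Reals ZArith Lra Lia.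
Open Scope R_scope.

Lemma frac_bounds y : irrational y -> 0 < y - IZR (floorZ y) < 1.
Proof.
  intros Hi. unfold floorZ. destruct (base_Int_part y) as [H1 H2].
  assert (y <> IZR (Int_part y)).
  { intro E. apply (Hi (Int_part y) 1%Z); [lia|]. unfold Rdiv. rewrite Rinv_1, Rmult_1_r. exact E. }
  lra.
Qed.

Lemma irr_step y : irrational y -> irrational (/ (y - IZR (floorZ y))).
Proof.
  intros Hi m n Hn H. pose proof (frac_bounds y Hi) as [F1 F2].
  set (f := y - IZR (floorZ y)) in *.
  assert (Hn' : IZR n <> 0) by (apply not_0_IZR; auto).
  assert (Hm : IZR m <> 0).
  { intro E. rewrite E in H. unfold Rdiv in H. rewrite Rmult_0_l in H.
    assert (0 < / f) by (apply Rinv_0_lt_compat; lra). lra. }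
  assert (H1 : f * (IZR m / IZR n) = 1).
  { rewrite <- H. field. lra. }
  assert (H2 : f * IZR m = IZR n).
  { replace (f * IZR m) with (f * (IZR m / IZR n) * IZR n) by (field; auto).
    rewrite H1; ring. }
  apply (Hi (floorZ y * m + n)%Z m).
  - intro E; subst; apply Hm; reflexivity.
  - rewrite plus_IZR, mult_IZR, <- H2. unfold f. field. auto.
Qed.

Lemma irr_x a : irrational a -> forall k, irrational (cf_x a k).
Proof.
  intros Hi k; induction k; simpl; auto. apply irr_step; auto.
Qed.

Lemma x_S a k : cf_x a (S k) = / (cf_x a k - IZR (cf_a a k)).
Proof. reflexivity. Qed.

Lemma a_le_x a k : irrational a -> IZR (cf_a a k) <= cf_x a k < IZR (cf_a a k) + 1.
Proof. intros Hi. pose proof (frac_bounds _ (irr_x a Hi k)). unfold cf_a. lra. Qed.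

Lemma x_gt1 a k : irrational a -> 1 < cf_x a (S k).
Proof.
  intros Hi. rewrite x_S. pose proof (frac_bounds _ (irr_x a Hi k)) as [F1 F2].
  unfold cf_a. rewrite <- Rinv_1. apply Rinv_lt_contravar; lra.
Qed.

Lemma a_ge1 a k : irrational a -> 1 <= IZR (cf_a a (S k)).
Proof.
  intros Hi. pose proof (a_le_x a (S k) Hi). pose proof (x_gt1 a k Hi).
  assert (0 < cf_a a (S k))%Z by (apply lt_IZR; simpl; lra).
  apply IZR_le; lia.
Qed.

Lemma x_rec a k : irrational a -> cf_x a k = IZR (cf_a a k) + / cf_x a (S k).
Proof. intros Hi. rewrite x_S, Rinv_inv. ring. Qed.

Definition qm a k := match k with O => 0 | S k' => IZR (cf_q a k') end.
Definition pm a k := match k with O => 1 | S k' => IZR (cf_p a k') end.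
Fixpoint ee a k := match k with O => / cf_x a 1 | S k' => ee a k' / cf_x a (S (S k')) end.
Definition em a k := match k with O => 1 | S k' => ee a k' end.

Lemma q_rec a k : IZR (cf_q a (S k)) = IZR (cf_a a (S k)) * IZR (cf_q a k) + qm a k.
Proof.
  destruct k.
  - simpl. ring.
  - change (cf_q a (S (S k))) with (cf_a a (S (S k)) * cf_q a (S k) + cf_q a k)%Z.
    rewrite plus_IZR, mult_IZR. reflexivity.
Qed.

Lemma p_rec a k : IZR (cf_p a (S k)) = IZR (cf_a a (S k)) * IZR (cf_p a k) + pm a k.
Proof.
  destruct k.
  - change (cf_p a 1) with (cf_a a 1 * cf_a a 0 + 1)%Z.
    rewrite plus_IZR, mult_IZR. reflexivity.
  - change (cf_p a (S (S k))) with (cf_a a (S (S k)) * cf_p a (S k) + cf_p a k)%Z.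
    rewrite plus_IZR, mult_IZR. reflexivity.
Qed.

Lemma ee_pos a k : irrational a -> 0 < ee a k.
Proof.
  intros Hi. induction k; cbn [ee].
  - apply Rinv_0_lt_compat. pose proof (x_gt1 a 0 Hi). lra.
  - pose proof (x_gt1 a (S k) Hi). apply Rdiv_lt_0_compat; lra.
Qed.

Lemma em_ee a k : irrational a -> em a k = ee a k * cf_x a (S k).
Proof.
  intros Hi. pose proof (x_gt1 a k Hi). destruct k; cbn [cf_q cf_p ee qm pm em pow].
  - field. lra.
  - field. lra.
Qed.

Lemma ee_rec a m : irrational a ->
  ee a m = IZR (cf_a a (S (S m))) * ee a (S m) + ee a (S (S m)).
Proof.
  intros Hi. pose proof (x_gt1 a (S m) Hi). pose proof (x_gt1 a (S (S m)) Hi).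
  pose proof (x_rec a (S (S m)) Hi).
  pose proof (a_ge1 a (S m) Hi). cbn [ee]. rewrite H1 in *. field. split; nra.
Qed.

Lemma D_form a k : irrational a ->
  IZR (cf_q a k) * a - IZR (cf_p a k) = (-1)^k * ee a k /\
  qm a k * a - pm a k = - (-1)^k * em a k.
Proof.
  intros Hi. induction k.
  - cbn [cf_q cf_p ee qm pm em pow]. split; [|ring]. rewrite x_S, Rinv_inv. unfold cf_a. cbn [cf_q cf_p ee qm pm em pow]. change (cf_x a 0) with a. ring.
  - destruct IHk as [I1 I2]. split.
    + rewrite q_rec, p_rec.
      replace (IZR (cf_a a (S k)) * IZR (cf_q a k) + qm a k) with
        (IZR (cf_a a (S k)) * IZR (cf_q a k) + qm a k) by reflexivity.
      transitivity (IZR (cf_a a (S k)) * (IZR (cf_q a k) * a - IZR (cf_p a k))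
                    + (qm a k * a - pm a k)); [ring|].
      rewrite I1, I2, (em_ee a k Hi), (x_rec a (S k) Hi).
      pose proof (x_gt1 a (S k) Hi). cbn [cf_q cf_p ee qm pm em pow]. field. lra.
    + cbn [cf_q cf_p ee qm pm em pow]. rewrite I1. ring.
Qed.

Lemma delta_ee a k : irrational a -> cf_delta a k = ee a k.
Proof.
  intros Hi. unfold cf_delta. rewrite (proj1 (D_form a k Hi)), Rabs_mult, pow_1_abs.
  rewrite Rabs_right. ring. left; apply ee_pos; auto.
Qed.

Lemma key a k : irrational a -> ee a k * (cf_x a (S k) * IZR (cf_q a k) + qm a k) = 1.
Proof.
  intros Hi. induction k.
  - cbn [cf_q cf_p ee qm pm em pow]. pose proof (x_gt1 a 0 Hi). field. lra.
  - rewrite q_rec. cbn [ee qm].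
    pose proof (x_gt1 a (S k) Hi). pose proof (x_rec a (S k) Hi).
    rewrite <- IHk. rewrite H0. field. lra.
Qed.

Lemma q_pos a k : irrational a -> 1 <= IZR (cf_q a k) /\ 0 <= qm a k.
Proof.
  intros Hi. induction k.
  - cbn [cf_q cf_p ee qm pm em pow]. lra.
  - rewrite q_rec. cbn [qm]. pose proof (a_ge1 a k Hi). destruct IHk. split; nra.
Qed.

Fixpoint altsum (g : nat -> R) (m len : nat) : R :=
  match len with O => 0 | S n => g m - altsum g (S m) n end.

Lemma altsum_bounds a g : irrational a ->
  (forall k, 0 <= g k <= IZR (cf_a a (S k)) * ee a k) ->
  forall len m, - ee a (S m) <= altsum g (S m) len <= ee a m.
Proof.
  intros Hi Hg len. induction len; intros m; cbn [altsum].
  - pose proof (ee_pos a m Hi); pose proof (ee_pos a (S m) Hi); lra.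
  - specialize (IHlen (S m)). pose proof (Hg (S m)). pose proof (ee_rec a m Hi). lra.
Qed.

Lemma altsum_up2 a g : irrational a ->
  (forall k, 0 <= g k <= IZR (cf_a a (S k)) * ee a k) ->
  forall len m, altsum g (S m) len <= g (S m) + ee a (S (S m)).
Proof.
  intros Hi Hg len m. destruct len; cbn [altsum].
  - pose proof (Hg (S m)). pose proof (ee_pos a (S (S m)) Hi). lra.
  - pose proof (altsum_bounds a g Hi Hg len (S m)). lra.
Qed.

Lemma sum_alt a b l : irrational a -> forall len m,
  sumR_range m len (fun k => (-1) ^ (k + l) * IZR (b k) * cf_delta a k) =
  (-1) ^ (m + l) * altsum (fun k => IZR (b k) * ee a k) m len.
Proof.
  intros Hi len. induction len; intros m; cbn [sumR_range altsum].
  - ring.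
  - rewrite IHlen, delta_ee by auto.
    replace ((-1) ^ (S m + l)) with (-1 * (-1) ^ (m + l)) by reflexivity. ring.
Qed.

Lemma eps_alt a K b l : irrational a ->
  ostr_eps a K b l = - IZR (cf_q a l) * altsum (fun k => IZR (b k) * ee a k) (S l) (K - S l).
Proof.
  intros Hi. unfold ostr_eps, sumR. rewrite sum_alt by auto.
  replace ((-1) ^ (S l + l)) with (-1 * (-1) ^ (2 * l)).
  - rewrite pow_1_even. ring.
  - replace (S l + l)%nat with (S (2 * l)) by lia. reflexivity.
Qed.

Lemma inv_le u A : 0 < A -> u * A <= 1 -> u <= / A.
Proof.
  intros HA H. replace u with (u * A * / A) by (field; lra).
  rewrite <- (Rmult_1_l (/ A)) at 2. apply Rmult_le_compat_r; auto.
  left; apply Rinv_0_lt_compat; auto.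
Qed.

Lemma core a K N b l : irrational a -> (2 <= K)%nat -> ostrowski a K N b ->
  (1 <= l <= K - 1)%nat -> (1 <= b l)%Z ->
  (- / IZR (cf_a a (S l)) <= - (IZR (cf_q a l) * cf_delta a l) /\
   - (IZR (cf_q a l) * cf_delta a l) <= ostr_eps a K b l /\
   ostr_eps a K b l <= / IZR (cf_a a (S l))) /\
  (1 - Rabs (ostr_eps a K b l) >= (1/4) / IZR (cf_a a (S (S l))) /\
   (IZR (b (S l)) <= IZR (cf_a a (S (S l))) / 2 -> 1 - Rabs (ostr_eps a K b l) >= 1/4)).
Proof.
  intros Hi HK [HN [_ [Hb [_ [Hmax Hz]]]]] Hl Hbl.
  set (g := fun k => IZR (b k) * ee a k).
  assert (Hg : forall k, 0 <= g k <= IZR (cf_a a (S k)) * ee a k).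
  { intros k. unfold g. pose proof (ee_pos a k Hi).
    destruct (Nat.lt_ge_cases k K) as [Hk|Hk].
    - destruct (Hb k Hk) as [B1 B2]. apply IZR_le in B1, B2. split; nra.
    - rewrite (Hz k Hk). pose proof (a_ge1 a k Hi). split; nra. }
  assert (HB1 : IZR (b (S l)) <= IZR (cf_a a (S (S l))) - 1).
  { destruct (Nat.lt_ge_cases (S l) K) as [Hk|Hk].
    - destruct (Hb _ Hk) as [B1 B2].
      assert (b (S l) <> cf_a a (S (S l))).
      { intro E. pose proof (Hmax (S l) ltac:(lia) E).
        replace (S l - 1)%nat with l in H by lia. lia. }
      rewrite <- minus_IZR. apply IZR_le. lia.
    - rewrite (Hz _ Hk). pose proof (a_ge1 a (S l) Hi). simpl. lra. }
  rewrite (delta_ee a l Hi), (eps_alt a K b l Hi).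
  fold g.
  set (T := altsum g (S l) (K - S l)).
  pose proof (altsum_bounds a g Hi Hg (K - S l) l) as [T1 T2]. fold T in T1, T2.
  pose proof (altsum_up2 a g Hi Hg (K - S l) l) as T3. fold T in T3.
  pose proof (key a l Hi) as Hkey.
  destruct (q_pos a l Hi) as [Q1 Q2].
  pose proof (ee_pos a l Hi) as E0.
  pose proof (a_ge1 a l Hi) as A1.
  pose proof (a_ge1 a (S l) Hi) as A2.
  pose proof (a_le_x a (S l) Hi) as [X1 X2].
  pose proof (a_le_x a (S (S l)) Hi) as [Y1 Y2].
  pose proof (x_gt1 a (S l) Hi) as Yg.
  pose proof (x_gt1 a (S (S l)) Hi) as Zg.
  pose proof (x_rec a (S l) Hi) as Xr.
  pose proof (ee_rec a l Hi) as Er.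
  unfold g in T3; cbv beta in T3.
  change (ee a (S l)) with (ee a l / cf_x a (S (S l))) in *.
  change (ee a (S (S l))) with (ee a l / cf_x a (S (S l)) / cf_x a (S (S (S l)))) in *.
  set (Q := IZR (cf_q a l)) in *.
  set (E := ee a l) in *.
  set (X := cf_x a (S l)) in *.
  set (Y := cf_x a (S (S l))) in *.
  set (Z := cf_x a (S (S (S l)))) in *.
  set (A := IZR (cf_a a (S l))) in *.
  set (A' := IZR (cf_a a (S (S l)))) in *.
  set (B := IZR (b (S l))) in *.
  assert (QEX : Q * E * X <= 1) by nra.
  assert (QE0 : 0 <= Q * E) by nra.
  assert (QEA : Q * E <= / A) by (apply inv_le; nra).
  assert (Yw : Y * / Y = 1) by (field; lra).
  assert (Zv : Z * / Z = 1) by (field; lra).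
  assert (w0 : 0 < / Y) by (apply Rinv_0_lt_compat; lra).
  assert (v0 : 0 < / Z) by (apply Rinv_0_lt_compat; lra).
  unfold Rdiv in *.
  set (w := / Y) in *. set (v := / Z) in *.
  assert (w1 : w < 1) by nra.
  assert (v1 : v < 1) by nra.
  assert (A'w : A' * w <= 1) by nra.
  assert (A'w2 : (A' + 1) * w > 1) by nra.
  assert (HX : X >= 1 + w) by lra.
  assert (QEw : Q * E * (1 + w) <= 1) by nra.
  assert (Tlow : - (Q * T) <= Q * (E * w)) by nra.
  assert (Tup : Q * T <= Q * (B * (E * w) + E * w * v)) by nra.
  assert (QEA' : Q * E <= / A) by exact QEA.
  split; [split; [|split]|].
  - lra.
  - nra.
  - assert (Q * (E * w) <= Q * E) by nra. lra.
  - assert (U1 : - Q * T <= 1 / 2) by nra.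
    split.
    + assert (L1 : Q * T <= Q * E) by nra.
      assert (r1 : / A' * A' = 1) by (field; lra).
      assert (r0 : 0 < / A') by (apply Rinv_0_lt_compat; lra).
      set (r := / A') in *.
      assert (L2 : Q * E <= 1 - 1 / 4 * r).
      { assert (4 * A' * w >= 1 + w) by nra.
        assert (Q * E * (4 * A' * (1 + w)) <= (4 * A' - 1) * (1 + w)) by nra.
        nra. }
      unfold Rabs; destruct Rcase_abs; nra.
    + intros HB2.
      assert (Ew0 : 0 <= E * w) by nra.
      assert (a1 : B * (E * w) <= A' / 2 * (E * w)) by (apply Rmult_le_compat_r; lra).
      assert (a2 : A' * (E * w) <= E) by nra.
      assert (a3 : E * w * v <= E * w) by nra.
      assert (a4 : B * (E * w) + E * w * v <= E * (1 / 2 + w)) by lra.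
      assert (L1 : Q * T <= Q * E * (1 / 2 + w)).
      { rewrite Rmult_assoc. eapply Rle_trans; [exact Tup|].
        apply Rmult_le_compat_l; lra. }
      assert (L2 : Q * E * (1 / 2 + w) <= 3 / 4).
      { assert (Q * E * (1 / 2 + w) * (1 + w) <= 3 / 4 * (1 + w)) by nra. nra. }
      unfold Rabs; destruct Rcase_abs; nra.
Qed.
Theorem proposition2 :
  (forall (alpha : R) (K : nat) (N : Z) (b : nat -> Z) (l : nat),
      irrational alpha -> (2 <= K)%nat -> ostrowski alpha K N b ->
      (1 <= l <= K - 1)%nat -> (1 <= b l)%Z ->
      - / IZR (cf_a alpha (S l)) <= - (IZR (cf_q alpha l) * cf_delta alpha l) /\
      - (IZR (cf_q alpha l) * cf_delta alpha l) <= ostr_eps alpha K b l /\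
      ostr_eps alpha K b l <= / IZR (cf_a alpha (S l))) /\
  (exists c : R, 0 < c /\
    forall (alpha : R) (K : nat) (N : Z) (b : nat -> Z) (l : nat),
      irrational alpha -> (2 <= K)%nat -> ostrowski alpha K N b ->
      (1 <= l <= K - 1)%nat -> (1 <= b l)%Z ->
      1 - Rabs (ostr_eps alpha K b l) >= c / IZR (cf_a alpha (S (S l))) /\
      (IZR (b (S l)) <= IZR (cf_a alpha (S (S l))) / 2 ->
         1 - Rabs (ostr_eps alpha K b l) >= c)).
Proof.
  split.
  - intros a K N b l Hi HK Ho Hl Hb. exact (proj1 (core a K N b l Hi HK Ho Hl Hb)).
  - exists (1/4). split; [lra|].
    intros a K N b l Hi HK Ho Hl Hb. exact (proj2 (core a K N b l Hi HK Ho Hl Hb)).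
Qed.
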